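(* Suppose that a group $G$ has a non-elementary action by isometries on a geodesic $\delta$-hyperbolic space $X$, and that $G$ contains a WPD element. Let $o\in X$. For any $0<\eta<1$ there exists $C>0$ such that for any $D>0$ and any $K>0$ there is a finite set $S\subseteq G$ which is $(\eta,C,D)$-Schottky and such that for every $s\in S$ the coarse joint stabilizer $\mathrm{Stab}_K(o,so)$ is finite.
   Context: Gromov product $(x,y)_z=\frac12(d(x,z)+d(y,z)-d(x,y))$. A finite set $S$ is $(\eta,C,D)$-Schottky if for all $x,y\in X$, $\#\{s\in S:(x,sy)_o\le C\}\ge(1-\eta)\#S$ and $\#\{s\in S:(x,s^{-1}y)_o\le C\}\ge(1-\eta)\#S$, and $d(o,so)\ge D$ for all $s\in S$. $\mathrm{Stab}_K(x,y)=\{g\in G:d(x,gx)\le K,\ d(y,gy)\le K\}$. An element $g$ is loxodromic if $\lim_n d(g^no,o)/n>0$; it is WPD if it is loxodromic and for any $x\in X$, $K\ge0$ there is $P\ge1$ with $\mathrm{Stab}_K(x,g^Px)$ finite. The action is non-elementary if there are two loxodromic elements with disjoint fixed sets in $\partial X$. *)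

(* Defs.v *)
From Stdlib Require Import Reals List ClassicalEpsilon.
Open Scope R_scope.
Set Implicit Arguments.

Record Group := {
  gcar :> Type;
  gmul : gcar -> gcar -> gcar;
  gone : gcar;
  ginv : gcar -> gcar;
  gmul_assoc : forall a b c, gmul a (gmul b c) = gmul (gmul a b) c;
  gmul_1l : forall a, gmul gone a = a;
  gmul_Vl : forall a, gmul (ginv a) a = gone
}.

Fixpoint gpow (G : Group) (g : G) (n : nat) : G :=
  match n with O => gone G | S k => gmul G g (gpow G g k) end.
Arguments gpow {G}.

Definition is_metric (X : Type) (d : X -> X -> R) : Prop :=
  (forall x y, 0 <= d x y) /\ (forall x y, d x y = 0 <-> x = y) /\
  (forall x y, d x y = d y x) /\ (forall x y z, d x z <= d x y + d y z).

Definition geodesic_space (X : Type) (d : X -> X -> R) : Prop :=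
  forall x y : X, exists gam : R -> X,
    gam 0 = x /\ gam (d x y) = y /\
    forall s t, 0 <= s <= d x y -> 0 <= t <= d x y ->
      d (gam s) (gam t) = Rabs (s - t).

Definition gromov (X : Type) (d : X -> X -> R) (x y z : X) : R :=
  (d x z + d y z - d x y) / 2.

Definition hyperbolic (X : Type) (d : X -> X -> R) (delta : R) : Prop :=
  0 <= delta /\
  forall x y z w, gromov d x y w >= Rmin (gromov d x z w) (gromov d y z w) - delta.

Definition isometric_action {G : Group} {X : Type} (d : X -> X -> R)
  (act : G -> X -> X) : Prop :=
  (forall x, act (gone G) x = x) /\
  (forall g h x, act (gmul G g h) x = act g (act h x)) /\
  (forall g x y, d (act g x) (act g y) = d x y).

Definition stab_finite {G : Group} {X : Type} (d : X -> X -> R)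
  (act : G -> X -> X) (K : R) (x y : X) : Prop :=
  exists l : list G, forall g : G,
    d x (act g x) <= K -> d y (act g y) <= K -> In g l.

Definition loxodromic {G : Group} {X : Type} (d : X -> X -> R)
  (act : G -> X -> X) (o : X) (g : G) : Prop :=
  exists l, l > 0 /\ Un_cv (fun n => d (act (gpow g n) o) o / INR n) l.

Definition WPD {G : Group} {X : Type} (d : X -> X -> R)
  (act : G -> X -> X) (o : X) (g : G) : Prop :=
  loxodromic d act o g /\
  forall (x : X) (K : R), K >= 0 ->
    exists P : nat, (1 <= P)%nat /\ stab_finite d act K x (act (gpow g P) x).

(** Gromov boundary: sequences converging at infinity, up to equivalence. *)
Definition equiv_at_inf (X : Type) (d : X -> X -> R) (w : X) (u v : nat -> X) : Prop :=
  forall M : R, exists N : nat, forall n m : nat, (N <= n)%nat -> (N <= m)%nat ->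
    gromov d (u n) (v m) w >= M.

Definition conv_at_inf (X : Type) (d : X -> X -> R) (w : X) (u : nat -> X) : Prop :=
  equiv_at_inf d w u u.

Definition fixes_bdry {G : Group} {X : Type} (d : X -> X -> R)
  (act : G -> X -> X) (w : X) (g : G) (u : nat -> X) : Prop :=
  equiv_at_inf d w (fun n => act g (u n)) u.

Definition non_elementary {G : Group} {X : Type} (d : X -> X -> R)
  (act : G -> X -> X) (w : X) : Prop :=
  exists g h : G, loxodromic d act w g /\ loxodromic d act w h /\
    ~ (exists u : nat -> X, conv_at_inf d w u /\
         fixes_bdry d act w g u /\ fixes_bdry d act w h u).

(** Cardinality of {s in S | P s} (S a duplicate-free list). *)
Definition count_P (A : Type) (P : A -> Prop) (S : list A) : nat :=
  length (filter (fun s => if excluded_middle_informative (P s) then true else false) S).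

Definition schottky {G : Group} {X : Type} (d : X -> X -> R)
  (act : G -> X -> X) (o : X) (eta C D : R) (S : list G) : Prop :=
  (forall x y : X,
     INR (count_P (fun s => gromov d x (act s y) o <= C) S) >= (1 - eta) * INR (length S) /\
     INR (count_P (fun s => gromov d x (act (ginv G s) y) o <= C) S) >= (1 - eta) * INR (length S)) /\
  (forall s, In s S -> d o (act s o) >= D).

(* Main.v *)
Require Import Defs.
From Stdlib Require Import Reals List Lra Lia Classical ZArith ClassicalEpsilon.
Import ListNotations.
Open Scope R_scope.

Section Grp.
Variable G : Group.
Notation "a * b" := (gmul G a b).
Notation e := (gone G).
Notation inv := (ginv G).

Lemma g_cancel_l (a b c : G) : a * b = a * c -> b = c.
Proof.
  intro H. rewrite <- (gmul_1l G b), <- (gmul_1l G c), <- (gmul_Vl G a).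
  rewrite <- !gmul_assoc, H. reflexivity.
Qed.

Lemma g_mul1r (a : G) : a * e = a.
Proof.
  apply (g_cancel_l (inv a)). rewrite gmul_assoc, gmul_Vl, gmul_1l. reflexivity.
Qed.

Lemma g_mulVr (a : G) : a * inv a = e.
Proof.
  apply (g_cancel_l (inv a)). rewrite gmul_assoc, gmul_Vl, gmul_1l, g_mul1r. reflexivity.
Qed.

Lemma g_inv_unique (a b : G) : a * b = e -> inv a = b.
Proof.
  intro H. apply (g_cancel_l a). rewrite g_mulVr. auto.
Qed.

Lemma g_invK (a : G) : inv (inv a) = a.
Proof. apply g_inv_unique. apply gmul_Vl. Qed.

Lemma g_invM (a b : G) : inv (a * b) = inv b * inv a.
Proof.
  apply g_inv_unique. rewrite gmul_assoc, <- (gmul_assoc G a b), g_mulVr, g_mul1r, g_mulVr.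
  reflexivity.
Qed.

Lemma g_inv1 : inv e = e.
Proof. apply g_inv_unique. apply gmul_1l. Qed.

Lemma gpow_add (a : G) m n : gpow a (m + n) = gpow a m * gpow a n.
Proof.
  induction m; simpl. now rewrite gmul_1l.
  rewrite IHm, gmul_assoc. reflexivity.
Qed.

Lemma gpow_S' (a : G) n : gpow a (S n) = gpow a n * a.
Proof.
  replace (S n) with (n + 1)%nat by lia. rewrite gpow_add. simpl. now rewrite g_mul1r.
Qed.

Lemma gpow_mul (a : G) m n : gpow a (m * n) = gpow (gpow a m) n.
Proof.
  induction n. simpl. now rewrite Nat.mul_0_r.
  replace (m * S n)%nat with (m + m * n)%nat by lia. rewrite gpow_add, IHn. reflexivity.
Qed.

Lemma gpow_inv (a : G) n : gpow (inv a) n = inv (gpow a n).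
Proof.
  induction n; simpl. now rewrite g_inv1.
  rewrite IHn, <- g_invM, <- gpow_S'. reflexivity.
Qed.
End Grp.

Section Geo.
Variables (G : Group) (X : Type) (d : X -> X -> R) (delta : R) (act : G -> X -> X) (o : X).
Hypotheses (Hm : is_metric d) (Hh : hyperbolic d delta) (Ha : isometric_action d act).
Notation inv := (ginv G).
Notation gp := (gromov d).

Lemma dnn x y : 0 <= d x y. Proof. apply Hm. Qed.
Lemma dsym x y : d x y = d y x. Proof. apply Hm. Qed.
Lemma dtri x y z : d x z <= d x y + d y z. Proof. apply Hm. Qed.
Lemma d0 x : d x x = 0. Proof. apply Hm. reflexivity. Qed.
Lemma delta_nn : 0 <= delta. Proof. apply Hh. Qed.

Lemma act_mul a b x : act (gmul G a b) x = act a (act b x). Proof. apply Ha. Qed.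
Lemma act1 x : act (gone G) x = x. Proof. apply Ha. Qed.
Lemma act_iso a x y : d (act a x) (act a y) = d x y. Proof. apply Ha. Qed.
Lemma act_invl a x : act (inv a) (act a x) = x.
Proof. rewrite <- act_mul, gmul_Vl. apply act1. Qed.
Lemma act_invr a x : act a (act (inv a) x) = x.
Proof. rewrite <- act_mul, g_mulVr. apply act1. Qed.

Lemma gp_iso a x y z : gp (act a x) (act a y) (act a z) = gp x y z.
Proof. unfold gromov. rewrite !act_iso. reflexivity. Qed.
Lemma gp_sym x y z : gp x y z = gp y x z.
Proof. unfold gromov. rewrite (dsym x y). lra. Qed.
Lemma gp_le x y z : gp x y z <= d y z.
Proof. unfold gromov. pose proof (dtri x y z). pose proof (dsym x y). lra. Qed.
Lemma gp_le' x y z : gp x y z <= d x z.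
Proof. rewrite gp_sym. apply gp_le. Qed.
Lemma gp_nn x y z : 0 <= gp x y z.
Proof. unfold gromov. pose proof (dtri x z y). pose proof (dsym z y). lra. Qed.
Lemma gp_id p z q : gp p z q + gp q z p = d q p.
Proof. unfold gromov. pose proof (dsym p q). pose proof (dsym z q). pose proof (dsym p z). lra. Qed.
Lemma gp_lip x x' y z : gp x y z <= gp x' y z + d x x'.
Proof.
  unfold gromov. pose proof (dtri x x' z). pose proof (dtri x' x y).
  pose proof (dsym x x'). lra.
Qed.
Lemma gp_lip2 x y y' z : gp x y z <= gp x y' z + d y y'.
Proof. rewrite (gp_sym x y), (gp_sym x y'). apply gp_lip. Qed.
Lemma gp_base x y p q : gp x y p <= gp x y q + d p q.
Proof.
  unfold gromov. pose proof (dtri x q p). pose proof (dtri y q p).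
  pose proof (dsym p q). lra.
Qed.
Lemma hyp4 x y z w t : t <= gp x z w -> t <= gp y z w -> t - delta <= gp x y w.
Proof.
  intros H1 H2. destruct Hh as [_ H]. specialize (H x y z w).
  unfold Rmin in H. destruct (Rle_dec _ _); lra.
Qed.
Lemma gp_self x z : gp x x z = d x z.
Proof. unfold gromov. rewrite d0. pose proof (dsym x z). lra. Qed.
Lemma gp_base0 x z : gp z x z = 0.
Proof. unfold gromov. rewrite d0. pose proof (dsym x z). lra. Qed.
Lemma gp_base0' x z : gp x z z = 0.
Proof. unfold gromov. rewrite d0. pose proof (dsym x z). lra. Qed.

Lemma gp_letter a z : gp o (act a z) (act a o) = gp (act (inv a) o) z o.
Proof.
  rewrite <- (gp_iso a (act (inv a) o) z o), act_invr. reflexivity.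
Qed.
Lemma d_inv a : d o (act (inv a) o) = d o (act a o).
Proof.
  rewrite <- (act_iso a o), act_invr, dsym. reflexivity.
Qed.

Lemma between_close z p p' E1 E2 :
  gp o z p <= E1 -> gp o z p' <= E2 ->
  d p p' <= Rabs (d o p - d o p') + 2 * Rmax E1 E2 + 2 * delta.
Proof.
  intros H1 H2.
  pose proof (gp_id p z o) as I1. pose proof (gp_id p' z o) as I2.
  assert (Hpp : Rmin (d o p - E1) (d o p' - E2) - delta <= gp p p' o).
  { apply hyp4 with (z := z).
    - pose proof (Rmin_l (d o p - E1) (d o p' - E2)). lra.
    - pose proof (Rmin_r (d o p - E1) (d o p' - E2)). lra. }
  unfold gromov in Hpp. rewrite (dsym p o), (dsym p' o) in Hpp.
  unfold Rmin, Rmax, Rabs in *.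
  destruct (Rle_dec _ _); destruct (Rle_dec E1 E2); destruct (Rcase_abs _); lra.
Qed.

Definition is_chain (x : nat -> X) (k : nat) (L E : R) :=
  (forall j, (j < k)%nat -> L <= d (x j) (x (S j))) /\
  (forall j, (S j < k)%nat -> gp (x j) (x (S (S j))) (x (S j)) <= E).

Lemma chain1 x k L E : is_chain x k L E -> 0 <= E -> 2*E + 3*delta < L ->
  forall m, (S m <= k)%nat -> gp (x 0%nat) (x (S m)) (x m) <= E + delta.
Proof.
  intros [Hs Hj] HE HL. pose proof delta_nn.
  induction m; intros Hm1.
  - rewrite gp_base0. lra.
  - specialize (IHm ltac:(lia)).
    pose proof (gp_id (x m) (x 0%nat) (x (S m))) as I.
    rewrite (gp_sym (x (S m)) (x 0%nat)) in I.
    pose proof (Hs m ltac:(lia)). rewrite (dsym (x (S m))) in I.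
    pose proof (Hj m ltac:(lia)) as J.
    set (A := gp (x m) (x 0%nat) (x (S m))) in *.
    set (Bv := gp (x 0%nat) (x (S (S m))) (x (S m))).
    destruct (Rle_dec Bv (E + delta)) as [ok|nok]; [exact ok|exfalso].
    pose proof (hyp4 (x m) (x (S (S m))) (x 0%nat) (x (S m)) (Rmin A Bv)
      (Rmin_l _ _) ltac:(rewrite gp_sym; apply Rmin_r)).
    unfold Rmin in *. destruct (Rle_dec A Bv); lra.
Qed.

Lemma chain_rev x k L E : is_chain x k L E -> is_chain (fun i => x (k - i)%nat) k L E.
Proof.
  intros [Hs Hj]. split.
  - intros i Hi. replace (k - i)%nat with (S (k - S i)) by lia.
    rewrite dsym. apply Hs. lia.
  - intros i Hi. simpl.
    replace (k - i)%nat with (S (S (k - S (S i)))) by lia.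
    replace (k - S i)%nat with (S (k - S (S i))) by lia.
    rewrite gp_sym. apply Hj. lia.
Qed.

Lemma chain2 x k L E : is_chain x k L E -> 0 <= E -> 2*E + 3*delta < L ->
  forall j, (j <= k)%nat -> gp (x 0%nat) (x k) (x j) <= E + 2*delta.
Proof.
  intros Hc HE HL j Hjk. pose proof delta_nn.
  destruct j as [|j'].
  - rewrite gp_base0. lra.
  - destruct (Nat.eq_dec (S j') k) as [<-|Hne].
    + rewrite gp_base0'. lra.
    + pose proof (chain1 _ _ _ _ Hc HE HL j' ltac:(lia)) as F.
      pose proof (chain1 _ _ _ _ (chain_rev _ _ _ _ Hc) HE HL (k - S j') ltac:(lia)) as Rv.
      simpl in Rv. rewrite Nat.sub_0_r in Rv.
      replace (k - S (k - S j'))%nat with j' in Rv by lia.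
      replace (k - (k - S j'))%nat with (S j') in Rv by lia.
      destruct Hc as [Hs _]. pose proof (Hs j' ltac:(lia)).
      pose proof (gp_id (x j') (x 0%nat) (x (S j'))) as I.
      rewrite (gp_sym (x (S j')) (x 0%nat)), (dsym (x (S j'))) in I.
      set (A := gp (x j') (x 0%nat) (x (S j'))) in *.
      set (Bv := gp (x 0%nat) (x k) (x (S j'))).
      destruct (Rle_dec Bv (E + 2*delta)) as [ok|nok]; [exact ok|exfalso].
      pose proof (hyp4 (x j') (x k) (x 0%nat) (x (S j')) (Rmin A Bv)
        (Rmin_l _ _) ltac:(rewrite gp_sym; apply Rmin_r)) as H4.
      rewrite (gp_sym (x j') (x k)) in H4.
      unfold Rmin in *. destruct (Rle_dec A Bv); lra.
Qed.


Lemma nat_gt (r : R) : exists n : nat, r < INR n.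
Proof.
  destruct (archimed r) as [H _]. exists (Z.to_nat (up r)).
  destruct (Z_lt_le_dec (up r) 0%Z) as [Hl|Hl].
  - replace (Z.to_nat (up r)) with 0%nat by lia. simpl. apply IZR_lt in Hl. lra.
  - rewrite INR_IZR_INZ, Z2Nat.id by exact Hl. lra.
Qed.

Definition RP (f : G) (E : R) := forall a b : nat,
  gp (act (gpow (inv f) a) o) (act (gpow f b) o) o <= E.
Definition UB (f : G) := forall M, exists N : nat, forall n, (N <= n)%nat ->
  M <= d o (act (gpow f n) o).

Lemma d_pow f n : d o (act (gpow f n) o) <= INR n * d o (act f o).
Proof.
  induction n.
  - simpl. rewrite act1, d0. lra.
  - rewrite S_INR. simpl. rewrite act_mul.
    pose proof (dtri o (act f o) (act f (act (gpow f n) o))).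
    rewrite act_iso in H. lra.
Qed.

Lemma d_pow_inv f n : d o (act (gpow (inv f) n) o) = d o (act (gpow f n) o).
Proof. rewrite gpow_inv. apply d_inv. Qed.

Lemma RP_inv f E : RP f E -> RP (inv f) E.
Proof.
  intros H a b. rewrite g_invK, gp_sym. apply H.
Qed.

Lemma UB_inv f : UB f -> UB (inv f).
Proof.
  intros H M. destruct (H M) as [N HN]. exists N. intros n Hn.
  rewrite d_pow_inv. auto.
Qed.

Lemma RP_letter f E a c : RP f E ->
  gp o (act (gpow f a) (act (gpow f c) o)) (act (gpow f a) o) <= E.
Proof.
  intros H. rewrite gp_letter, <- gpow_inv. apply H.
Qed.

Lemma RP_lower f E : RP f E -> forall a b,
  Rmin (d o (act (gpow f a) o)) (d o (act (gpow f b) o)) - E <=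
  gp (act (gpow f a) o) (act (gpow f b) o) o.
Proof.
  intros H.
  assert (K : forall a c, d o (act (gpow f a) o) - E <=
      gp (act (gpow f a) o) (act (gpow f (a + c)) o) o).
  { intros a c. rewrite gpow_add, act_mul.
    set (A := gpow f a).
    assert (Eq : gp (act A o) (act A (act (gpow f c) o)) o = gp o (act (gpow f c) o) (act (inv A) o))
      by (rewrite <- (gp_iso A o (act (gpow f c) o) (act (inv A) o)), act_invr; reflexivity).
    rewrite Eq.
    pose proof (gp_id (act (inv A) o) (act (gpow f c) o) o) as I.
    rewrite d_inv in I. unfold A in I. rewrite <- gpow_inv in I.
    pose proof (H a c). unfold A. rewrite <- gpow_inv. unfold A in *. lra. }
  intros a b. destruct (le_lt_dec a b) as [Hab|Hab].
  - replace b with (a + (b - a))%nat by lia. pose proof (K a (b - a)%nat).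
    pose proof (Rmin_l (d o (act (gpow f a) o)) (d o (act (gpow f (a + (b - a))) o))). lra.
  - replace a with (b + (a - b))%nat by lia. pose proof (K b (a - b)%nat).
    rewrite gp_sym.
    pose proof (Rmin_r (d o (act (gpow f (b + (a - b))) o)) (d o (act (gpow f b) o))). lra.
Qed.

Lemma RP_add f E : RP f E -> forall a c,
  d o (act (gpow f a) o) + d o (act (gpow f c) o) - 2 * E <= d o (act (gpow f (a + c)) o).
Proof.
  intros H a c. pose proof (RP_letter f E a c H) as J.
  rewrite gpow_add, act_mul. unfold gromov in J.
  rewrite act_iso, (dsym (act (gpow f c) o) o) in J. lra.
Qed.

Lemma lox_UB f : loxodromic d act o f -> UB f.
Proof.
  intros [l [Hl Hc]] M.
  destruct (Hc (l/2) ltac:(lra)) as [N HN].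
  destruct (nat_gt (2 * M / l)) as [N2 HN2].
  exists (N + N2 + 1)%nat. intros n Hn.
  specialize (HN n ltac:(lia)). unfold Rdist, Rabs in HN.
  assert (Hpos : 0 < INR n) by (apply lt_0_INR; lia).
  assert (INR N2 <= INR n) by (apply le_INR; lia).
  assert (Hq : l / 2 < d (act (gpow f n) o) o / INR n).
  { destruct (Rcase_abs _); lra. }
  apply (Rmult_lt_compat_r (INR n)) in Hq; [|lra].
  assert (d (act (gpow f n) o) o / INR n * INR n = d (act (gpow f n) o) o) by (field; lra).
  assert (2 * M / l * l = 2 * M) by (field; lra).
  assert (2 * M / l * l <= INR n * l) by (apply Rmult_le_compat_r; lra).
  rewrite dsym. nra.
Qed.

Lemma RP_power_chain F : 2 * gp o (act (gpow F 2) o) (act F o) + 3 * delta < d o (act F o) ->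
  RP F (gp o (act (gpow F 2) o) (act F o) + 2 * delta).
Proof.
  intros HL a b. set (E0 := gp o (act (gpow F 2) o) (act F o)) in *.
  set (x := fun i => act (gpow (inv F) a) (act (gpow F i) o)).
  assert (Hc : is_chain x (a + b) (d o (act F o)) E0).
  { split.
    - intros j _. unfold x. rewrite act_iso, gpow_S', act_mul, act_iso. lra.
    - intros j _. unfold x. rewrite gp_iso.
      replace (S (S j)) with (j + 2)%nat by lia. replace (S j) with (j + 1)%nat by lia.
      rewrite !gpow_add, !act_mul, gp_iso. unfold E0. simpl. rewrite g_mul1r. lra. }
  pose proof (chain2 x (a + b) _ _ Hc (gp_nn _ _ _) HL a ltac:(lia)) as H.
  unfold x in H. rewrite gpow_inv, act_invl in H.
  rewrite gpow_add, act_mul, act_invl in H. simpl in H. rewrite act1 in H.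
  rewrite gpow_inv. exact H.
Qed.

Lemma lox_RP f : loxodromic d act o f -> exists E, 0 <= E /\ RP f E.
Proof.
  intros Hlox. destruct Hlox as [l [Hl Hc]].
  destruct (Hc (l/4) ltac:(lra)) as [N HN].
  destruct (nat_gt (12 * delta / l)) as [N2 HN2].
  set (n0 := (N + N2 + 1)%nat).
  assert (Hb : forall n, (N <= n)%nat -> (0 < n)%nat ->
     3 * INR n * l / 4 < d o (act (gpow f n) o) < 5 * INR n * l / 4).
  { intros n Hn Hn0. specialize (HN n Hn). unfold Rdist, Rabs in HN.
    assert (Hpos : 0 < INR n) by (apply lt_0_INR; lia).
    rewrite dsym.
    set (q := d (act (gpow f n) o) o) in *.
    assert (q = q / INR n * INR n) by (field; lra).
    destruct (Rcase_abs _); split; nra. }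
  assert (H1 := Hb n0 ltac:(unfold n0; lia) ltac:(unfold n0; lia)).
  assert (H2 := Hb (n0 * 2)%nat ltac:(unfold n0; lia) ltac:(unfold n0; lia)).
  rewrite mult_INR in H2. simpl (INR 2) in H2.
  assert (INR N2 <= INR n0) by (apply le_INR; unfold n0; lia).
  assert (12 * delta / l * l = 12 * delta) by (field; lra).
  assert (12 * delta / l * l <= INR n0 * l) by (apply Rmult_le_compat_r; lra).
  set (F := gpow f n0).
  assert (HF2 : gpow f (n0 * 2) = gpow F 2) by (apply gpow_mul).
  rewrite HF2 in H2. fold F in H1.
  assert (HE0 : 2 * gp o (act (gpow F 2) o) (act F o) + 3 * delta < d o (act F o)).
  { unfold gromov. simpl. rewrite g_mul1r, act_mul, act_iso.
    simpl in H2. rewrite g_mul1r, act_mul in H2. rewrite (dsym (act F o) o). nra. }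
  pose proof (RP_power_chain F HE0) as HRP.
  set (E0 := gp o (act (gpow F 2) o) (act F o)) in *.
  assert (0 <= E0) by apply gp_nn. pose proof delta_nn.
  exists (E0 + 2 * delta + 2 * (INR n0 * d o (act f o))).
  pose proof (dnn o (act f o)). pose proof (pos_INR n0).
  split. { apply Rplus_le_le_0_compat. lra. apply Rmult_le_pos; [lra|]. apply Rmult_le_pos; lra. }
  assert (Hn0 : n0 <> 0%nat) by (unfold n0; lia).
  assert (Hdec : forall (g : G) m, gpow g m = gmul G (gpow (gpow g n0) (m / n0)) (gpow g (m mod n0))).
  { intros g m. rewrite <- gpow_mul, <- gpow_add. f_equal. apply Nat.div_mod_eq. }
  assert (Hr : forall m, d o (act (gpow f (m mod n0)) o) <= INR n0 * d o (act f o)).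
  { intros m. eapply Rle_trans. apply d_pow. apply Rmult_le_compat_r. lra.
    apply le_INR. pose proof (Nat.mod_upper_bound m n0 Hn0). lia. }
  intros a b. rewrite (Hdec _ a), (Hdec _ b), !act_mul.
  rewrite (gpow_inv _ f n0). fold F.
  specialize (HRP (a / n0)%nat (b / n0)%nat).
  eapply Rle_trans.
  { apply gp_lip with (x' := act (gpow (inv F) (a / n0)) o). }
  eapply Rle_trans.
  { apply Rplus_le_compat_r. apply gp_lip2 with (y' := act (gpow F (b / n0)) o). }
  rewrite !act_iso. rewrite (dsym (act (gpow (inv f) _) o) o), d_pow_inv.
  pose proof (Hr a). pose proof (Hr b). rewrite (dsym (act (gpow f (b mod n0)) o) o). lra.
Qed.

Definition ray (f : G) := fun n : nat => act (gpow f n) o.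
Definition NS (f1 f2 : G) := forall M, exists a b : nat,
  M <= gp (act (gpow f1 a) o) (act (gpow f2 b) o) o.
Notation EQ := (equiv_at_inf d o).

Lemma notNS_bound f1 f2 : ~ NS f1 f2 -> exists B, forall a b,
  gp (act (gpow f1 a) o) (act (gpow f2 b) o) o <= B.
Proof.
  intros H. apply NNPP. intros H2. apply H. intros M.
  apply NNPP. intros H3. apply H2. exists M. intros a b.
  destruct (Rle_dec (gp (act (gpow f1 a) o) (act (gpow f2 b) o) o) M) as [ok|nok]; auto.
  exfalso. apply H3. exists a, b. lra.
Qed.

Lemma NS_sym f1 f2 : NS f1 f2 -> NS f2 f1.
Proof.
  intros H M. destruct (H M) as [a [b Hab]]. exists b, a. rewrite gp_sym. exact Hab.
Qed.

Lemma NS_via v Ev f1 f2 : RP v Ev -> 0 <= Ev -> NS f1 v -> NS f2 v -> NS f1 f2.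
Proof.
  intros Hv HEv H1 H2 M. pose proof delta_nn.
  set (M' := M + Ev + 2 * delta).
  destruct (H1 M') as [a [c Hac]]. destruct (H2 M') as [b [c' Hbc]].
  pose proof (gp_le (act (gpow f1 a) o) (act (gpow v c) o) o).
  pose proof (gp_le (act (gpow f2 b) o) (act (gpow v c') o) o).
  rewrite dsym in H0, H3.
  pose proof (RP_lower v Ev Hv c c') as Hl.
  assert (M' - Ev <= gp (act (gpow v c) o) (act (gpow v c') o) o).
  { unfold Rmin in Hl. destruct (Rle_dec _ _); lra. }
  pose proof (hyp4 (act (gpow f2 b) o) (act (gpow v c) o) (act (gpow v c') o) o (M' - Ev)
    ltac:(lra) ltac:(lra)).
  pose proof (hyp4 (act (gpow f1 a) o) (act (gpow f2 b) o) (act (gpow v c) o) o (M' - Ev - delta)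
    ltac:(lra) ltac:(lra)).
  exists a, b. unfold M' in *. lra.
Qed.

Lemma EQ_sym u v : EQ u v -> EQ v u.
Proof.
  intros H M. destruct (H M) as [N HN]. exists N. intros n m Hn Hm'.
  rewrite gp_sym. apply HN; auto.
Qed.

Lemma EQ_trans u v w : EQ u v -> EQ v w -> EQ u w.
Proof.
  intros H1 H2 M. destruct (H1 (M + delta)) as [N1 HN1]. destruct (H2 (M + delta)) as [N2 HN2].
  exists (N1 + N2)%nat. intros n m Hn Hm'.
  assert (A1 := HN1 n (N1 + N2)%nat ltac:(lia) ltac:(lia)).
  assert (A2 := HN2 (N1 + N2)%nat m ltac:(lia) ltac:(lia)).
  apply Rge_le in A1. apply Rge_le in A2.
  rewrite gp_sym in A2.
  pose proof (hyp4 (u n) (w m) (v (N1 + N2)%nat) o (M + delta) A1 A2). lra.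
Qed.

Lemma EQ_act k u v : EQ u v -> EQ (fun n => act k (u n)) (fun n => act k (v n)).
Proof.
  intros H M. destruct (H (M + d o (act (inv k) o))) as [N HN]. exists N.
  intros n m Hn Hm'. specialize (HN n m Hn Hm').
  assert (Eq : gp (act k (u n)) (act k (v m)) o = gp (u n) (v m) (act (inv k) o)).
  { rewrite <- (gp_iso (inv k) (act k (u n))), !act_invl. reflexivity. }
  rewrite Eq. pose proof (gp_base (u n) (v m) o (act (inv k) o)). lra.
Qed.

Lemma ray_EQ f E u : RP f E -> UB f ->
  (forall n, (1 <= n)%nat -> exists m, (n <= S m)%nat /\ u n = ray f m) -> EQ u (ray f).
Proof.
  intros HR HU Hu M. destruct (HU (M + E)) as [N0 HN0]. exists (N0 + 1)%nat.
  intros n m Hn Hm'. destruct (Hu n ltac:(lia)) as [m' [Hm1 ->]].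
  pose proof (RP_lower f E HR m' m). unfold ray.
  assert (M + E <= Rmin (d o (act (gpow f m') o)) (d o (act (gpow f m) o))).
  { apply Rmin_glb; apply HN0; lia. }
  lra.
Qed.

Lemma ray_conv f E : RP f E -> UB f -> conv_at_inf d o (ray f).
Proof.
  intros HR HU. apply (ray_EQ f E); auto. intros n _. exists n. split; auto.
Qed.

Lemma fix_ray k f E : RP f E -> UB f -> (k = f \/ f = inv k) ->
  EQ (fun n => act k (ray f n)) (ray f).
Proof.
  intros HR HU Hk. apply (ray_EQ f E); auto. intros n Hn.
  destruct Hk as [ <- | -> ].
  - exists (S n). split; [lia|]. unfold ray. simpl. rewrite act_mul. reflexivity.
  - destruct n as [|n']; [lia|]. exists n'. split; [lia|].
    unfold ray. simpl. rewrite act_mul, act_invr. reflexivity.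
Qed.

Lemma NS_EQ f1 f2 E1 E2 : RP f1 E1 -> UB f1 -> RP f2 E2 -> UB f2 -> 0 <= E1 -> 0 <= E2 ->
  NS f1 f2 -> EQ (ray f1) (ray f2).
Proof.
  intros R1 U1 R2 U2 HE1 HE2 HNS M. pose proof delta_nn.
  set (M' := M + E1 + E2 + 2 * delta).
  destruct (HNS M') as [a [b Hab]].
  pose proof (gp_le (act (gpow f1 a) o) (act (gpow f2 b) o) o).
  pose proof (gp_le' (act (gpow f1 a) o) (act (gpow f2 b) o) o).
  rewrite dsym in H0, H1.
  destruct (U1 M') as [N1 HN1]. destruct (U2 M') as [N2 HN2].
  exists (N1 + N2)%nat. intros n m Hn Hm'. unfold ray.
  pose proof (RP_lower f1 E1 R1 n a). pose proof (RP_lower f2 E2 R2 m b).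
  assert (M' <= Rmin (d o (act (gpow f1 n) o)) (d o (act (gpow f1 a) o)))
    by (apply Rmin_glb; [apply HN1; lia|lra]).
  assert (M' <= Rmin (d o (act (gpow f2 m) o)) (d o (act (gpow f2 b) o)))
    by (apply Rmin_glb; [apply HN2; lia|lra]).
  rewrite (gp_sym (act (gpow f1 a) o)) in Hab.
  pose proof (hyp4 (act (gpow f1 n) o) (act (gpow f2 b) o) (act (gpow f1 a) o) o (M' - E1 - E2)
    ltac:(lra) ltac:(lra)) as H7.
  rewrite (gp_sym (act (gpow f1 n) o)) in H7.
  pose proof (hyp4 (act (gpow f1 n) o) (act (gpow f2 m) o) (act (gpow f2 b) o) o (M' - E1 - E2 - delta)
    ltac:(rewrite gp_sym; lra) ltac:(lra)).
  unfold M' in *. lra.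
Qed.

Lemma NS_common g h f1 f2 E1 E2 : RP f1 E1 -> UB f1 -> RP f2 E2 -> UB f2 -> 0 <= E1 -> 0 <= E2 ->
  (g = f1 \/ f1 = inv g) -> (h = f2 \/ f2 = inv h) -> NS f1 f2 ->
  exists u, conv_at_inf d o u /\ fixes_bdry d act o g u /\ fixes_bdry d act o h u.
Proof.
  intros R1 U1 R2 U2 HE1 HE2 Hg Hh' HNS. exists (ray f1).
  pose proof (NS_EQ f1 f2 E1 E2 R1 U1 R2 U2 HE1 HE2 HNS) as Heq.
  split; [apply (ray_conv f1 E1); auto|split].
  - apply (fix_ray g f1 E1); auto.
  - unfold fixes_bdry.
    apply EQ_trans with (fun n => act h (ray f2 n)).
    + apply EQ_act. exact Heq.
    + apply EQ_trans with (ray f2).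
      * apply (fix_ray h f2 E2); auto.
      * apply EQ_sym. exact Heq.
Qed.

Lemma stab_conj K x y a : stab_finite d act K x y -> stab_finite d act K (act a x) (act a y).
Proof.
  intros [l Hl]. exists (map (fun k => gmul G a (gmul G k (inv a))) l).
  intros k' H1 H2.
  set (k := gmul G (inv a) (gmul G k' a)).
  assert (Hk : forall z, act k z = act (inv a) (act k' (act a z))).
  { intros z. unfold k. rewrite !act_mul. reflexivity. }
  assert (Hin : In k l).
  { apply Hl.
    - rewrite Hk, <- (act_iso a), act_invr. exact H1.
    - rewrite Hk, <- (act_iso a), act_invr. exact H2. }
  apply in_map_iff. exists k. split; auto.
  unfold k. rewrite !gmul_assoc, g_mulVr, gmul_1l, <- gmul_assoc, g_mulVr, g_mul1r.
  reflexivity.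
Qed.

Lemma stab_contain K K' E z q1 q2 : 0 <= K -> 5 * K + 2 * E + 2 * delta <= K' ->
  gp o z q1 <= E -> gp o z q2 <= E -> stab_finite d act K' q1 q2 -> stab_finite d act K o z.
Proof.
  intros HK HK' H1 H2 [l Hl]. exists l. intros k Ho Hz.
  assert (Gen : forall q, gp o z q <= E -> d q (act k q) <= K').
  { intros q Hq.
    assert (Hkq : gp o z (act k q) <= E + 2 * K).
    { pose proof (gp_iso k o z q) as I.
      pose proof (gp_lip o (act k o) z (act k q)).
      pose proof (gp_lip2 (act k o) z (act k z) (act k q)).
      lra. }
    pose proof (between_close z q (act k q) E (E + 2 * K) Hq Hkq) as Hb.
    assert (Rabs (d o q - d o (act k q)) <= K).
    { rewrite <- (act_iso k o q).
      pose proof (dtri o (act k o) (act k q)) as T1. pose proof (dtri (act k o) o (act k q)) as T2.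
      rewrite (dsym (act k o) o) in T2. apply Rabs_le. lra. }
    assert (Rmax E (E + 2 * K) = E + 2 * K) by (apply Rmax_right; lra).
    lra. }
  apply Hl; apply Gen; auto.
Qed.

Definition pts (l1 l2 l3 l4 l5 : G) (k : nat) : X :=
  match k with
  | 0 => o
  | 1 => act l1 o
  | 2 => act l1 (act l2 o)
  | 3 => act l1 (act l2 (act l3 o))
  | 4 => act l1 (act l2 (act l3 (act l4 o)))
  | _ => act l1 (act l2 (act l3 (act l4 (act l5 o))))
  end.

Lemma pts_chain l1 l2 l3 l4 l5 L E :
  L <= d o (act l1 o) -> L <= d o (act l2 o) -> L <= d o (act l3 o) ->
  L <= d o (act l4 o) -> L <= d o (act l5 o) ->
  gp (act (inv l1) o) (act l2 o) o <= E -> gp (act (inv l2) o) (act l3 o) o <= E ->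
  gp (act (inv l3) o) (act l4 o) o <= E -> gp (act (inv l4) o) (act l5 o) o <= E ->
  is_chain (pts l1 l2 l3 l4 l5) 5 L E.
Proof.
  intros D1 D2 D3 D4 D5 J1 J2 J3 J4. split.
  - intros j Hj. destruct j as [|[|[|[|[|j]]]]]; simpl; try lia; rewrite ?act_iso; auto.
  - intros j Hj. destruct j as [|[|[|[|j]]]]; simpl; try lia; rewrite ?gp_iso, gp_letter; auto.
Qed.

Lemma chain_prefix x k k' L E : is_chain x k L E -> (k' <= k)%nat -> is_chain x k' L E.
Proof.
  intros [H1 H2] Hk. split; intros j Hj; [apply H1|apply H2]; lia.
Qed.

Definition word (Y Xl Z : G) := gmul G Y (gmul G Xl (gmul G Z (gmul G (inv Xl) (inv Y)))).

Lemma word_inv Y Xl Z : inv (word Y Xl Z) = word Y Xl (inv Z).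
Proof.
  unfold word. rewrite !g_invM, !g_invK. rewrite !gmul_assoc. reflexivity.
Qed.

Lemma word_act Y Xl Z : act (word Y Xl Z) o = pts Y Xl Z (inv Xl) (inv Y) 5.
Proof. unfold word, pts. rewrite !act_mul. reflexivity. Qed.

Lemma word_facts Y Xl Z L B :
  0 <= B -> 2 * B + 3 * delta < L ->
  L <= d o (act Y o) -> L <= d o (act Xl o) -> L <= d o (act Z o) ->
  gp (act (inv Y) o) (act Xl o) o <= B -> gp (act (inv Xl) o) (act Z o) o <= B ->
  gp (act (inv Z) o) (act (inv Xl) o) o <= B -> gp (act Xl o) (act (inv Y) o) o <= B ->
  gp o (act (word Y Xl Z) o) (act Y o) <= B + 2 * delta /\
  gp o (act (word Y Xl Z) o) (act Y (act Xl o)) <= B + 2 * delta /\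
  gp o (act (word Y Xl Z) o) (act Y (act Xl (act Z o))) <= B + 2 * delta /\
  d o (act Y o) + L - 2 * (B + 2 * delta) <= d o (act Y (act Xl o)) /\
  d o (act Z o) - 4 * (B + 2 * delta) <= d o (act (word Y Xl Z) o).
Proof.
  intros HB HL D1 D2 D3 J1 J2 J3 J4.
  assert (Hc : is_chain (pts Y Xl Z (inv Xl) (inv Y)) 5 L B).
  { apply pts_chain; rewrite ?d_inv, ?g_invK; auto. }
  rewrite word_act.
  pose proof (chain2 _ _ _ _ Hc HB HL) as C5.
  pose proof (chain2 _ _ _ _ (chain_prefix _ _ 3 _ _ Hc ltac:(lia)) HB HL 2%nat ltac:(lia)) as C3.
  pose proof (chain2 _ _ _ _ (chain_prefix _ _ 2 _ _ Hc ltac:(lia)) HB HL 1%nat ltac:(lia)) as C2.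
  pose proof (C5 1%nat ltac:(lia)). pose proof (C5 2%nat ltac:(lia)).
  pose proof (C5 3%nat ltac:(lia)). simpl in *.
  split; [auto|split; [auto|split; [auto|]]].
  unfold gromov in *. rewrite !act_iso in *.
  pose proof (dnn (act (inv Xl) (act (inv Y) o)) o). pose proof (dnn o (act Y (act Xl o))).
  rewrite (dsym (act Xl o) o) in C2. rewrite (dsym (act Z o) o) in C3.
  split; lra.
Qed.

Lemma sep_lemma z1 z2 P P' E' V :
  gp o z1 P <= E' -> gp o z2 P' <= E' -> gp P P' o <= V ->
  V + 2 * delta < d o P - E' -> V + 2 * delta < d o P' - E' -> gp z1 z2 o <= V + 2 * delta.
Proof.
  intros H1 H2 HV HP HP'.
  pose proof (gp_id P z1 o) as I1. pose proof (gp_id P' z2 o) as I2.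
  destruct (Rle_dec (gp z1 z2 o) (V + 2 * delta)) as [ok|nok]; [exact ok|exfalso].
  set (t := Rmin (gp z1 z2 o) (Rmin (gp P z1 o) (gp P' z2 o))).
  assert (t1 : t <= gp z1 z2 o) by apply Rmin_l.
  assert (t2 : t <= gp P z1 o) by (eapply Rle_trans; [apply Rmin_r|apply Rmin_l]).
  assert (t3 : t <= gp P' z2 o) by (eapply Rle_trans; [apply Rmin_r|apply Rmin_r]).
  assert (t4 : V + 2 * delta < t).
  { unfold t. apply Rmin_glb_lt; [lra|]. apply Rmin_glb_lt; lra. }
  pose proof delta_nn.
  pose proof (hyp4 P z2 z1 o t t2 ltac:(rewrite gp_sym; lra)) as A.
  pose proof (hyp4 P P' z2 o (t - delta) A ltac:(lra)) as Bq.
  lra.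
Qed.

Lemma pingpong s x y c1 : gp x (act s o) o <= c1 -> gp y (act (inv s) o) o <= c1 ->
  2 * c1 + delta < d o (act s o) -> gp x (act s y) o <= c1 + delta.
Proof.
  intros H1 H2 H3.
  assert (E1 : gp (act s y) (act s o) o = gp y o (act (inv s) o)).
  { rewrite <- (gp_iso (inv s) (act s y)), !act_invl. reflexivity. }
  pose proof (gp_id (act (inv s) o) y o) as I. rewrite d_inv, (gp_sym o y) in I.
  rewrite (gp_sym (act (inv s) o)) in I.
  destruct (Rle_dec (gp x (act s y) o) (c1 + delta)) as [ok|nok]; [exact ok|exfalso].
  set (t := Rmin (gp x (act s y) o) (gp (act s y) (act s o) o)).
  assert (t1 : t <= gp x (act s y) o) by apply Rmin_l.
  assert (t2 : t <= gp (act s y) (act s o) o) by apply Rmin_r.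
  assert (t3 : c1 + delta < t) by (unfold t; apply Rmin_glb_lt; lra).
  rewrite gp_sym in t2.
  pose proof (hyp4 x (act s o) (act s y) o t t1 t2). lra.
Qed.

Lemma bad_unique z1 z2 x c0 : gp z1 z2 o <= c0 -> c0 + delta < gp x z1 o ->
  c0 + delta < gp x z2 o -> False.
Proof.
  intros H H1 H2. rewrite gp_sym in H1, H2.
  set (t := Rmin (gp z1 x o) (gp z2 x o)).
  assert (c0 + delta < t) by (unfold t; apply Rmin_glb_lt; lra).
  pose proof (hyp4 z1 z2 x o t (Rmin_l _ _) (Rmin_r _ _)). lra.
Qed.
Lemma count_ge (A : Type) (P : A -> Prop) (l : list A) (a b : A) : NoDup l ->
  (forall s, In s l -> ~ P s -> s = a \/ s = b) -> (length l - 2 <= count_P P l)%nat.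
Proof.
  intros Hnd Hab. unfold count_P.
  set (f := fun s => if excluded_middle_informative (P s) then true else false).
  pose proof (filter_length f l).
  assert (length (filter (fun x => negb (f x)) l) <= length [a; b])%nat.
  { apply NoDup_incl_length. apply NoDup_filter. exact Hnd.
    intros s Hs. apply filter_In in Hs. destruct Hs as [Hs Hn].
    unfold f in Hn. destruct (excluded_middle_informative (P s)); [discriminate|].
    destruct (Hab s Hs n) as [->| ->]; simpl; auto. }
  simpl in H0. lia.
Qed.


Lemma bad_pick (S : list G) (phi : G -> X) c0 z :
  (forall s s', In s S -> In s' S -> s <> s' -> gp (phi s) (phi s') o <= c0) ->
  exists a, forall s, In s S -> c0 + delta < gp z (phi s) o -> s = a.
Proof.
  intros Hsep.
  destruct (classic (exists s0, In s0 S /\ c0 + delta < gp z (phi s0) o)) as [[s0 [H0 H1]]|Hn].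
  - exists s0. intros s Hs Hb. apply NNPP. intros Hne.
    apply (bad_unique (phi s) (phi s0) z c0); auto.
  - exists (gone G). intros s Hs Hb. exfalso. apply Hn. exists s. auto.
Qed.

Lemma core (p q w : G) (Eq Ew B : R) :
  RP q Eq -> UB q -> 0 <= Eq -> UB (inv p) -> RP w Ew -> 0 <= Ew -> UB w ->
  (forall K, K >= 0 -> exists P : nat, stab_finite d act K o (act (gpow w P) o)) ->
  0 <= B ->
  (forall a b, gp (act (gpow (inv p) a) o) (act (gpow (inv q) b) o) o <= B) ->
  (forall a b, gp (act (gpow (inv p) a) o) (act (gpow q b) o) o <= B) ->
  (forall a b, gp (act (gpow p a) o) (act (gpow w b) o) o <= B) ->
  (forall a b, gp (act (gpow p a) o) (act (gpow (inv w) b) o) o <= B) ->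
  forall eta, 0 < eta < 1 -> exists C, C > 0 /\ forall D K, D > 0 -> K > 0 ->
    exists S : list G, S <> nil /\ NoDup S /\ schottky d act o eta C D S /\
      forall s, In s S -> stab_finite d act K o (act s o).
Proof.
  intros HRq HUq HEq HUp HRw HEw HUw HWPD HB S1 S2 S3 S4 eta Heta.
  pose proof delta_nn as Hd.
  destruct (nat_gt (2 / eta)) as [N HN].
  assert (HetaN : 2 < eta * INR N).
  { assert (2 / eta * eta = 2) by (field; lra).
    assert (2 / eta * eta < INR N * eta) by (apply Rmult_lt_compat_r; lra). lra. }
  assert (HN3 : (2 < N)%nat).
  { apply INR_lt. simpl. assert (2 < 2 / eta).
    { apply (Rmult_lt_reg_r eta); [lra|]. assert (2 / eta * eta = 2) by (field; lra). nra. }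
    lra. }
  set (E' := B + 2 * delta).
  set (Lreq := 4 * B + 8 * delta + 2 * Eq + 1).
  destruct (HUq Lreq) as [Nq HNq]. destruct (HUp Lreq) as [Np HNp].
  set (M := (Nq + Np + 1)%nat).
  set (Xl := gpow (inv p) M).
  set (Yi := fun i : nat => gpow q (M * S i)).
  set (c0 := B + 2 * delta + INR (M * N) * d o (act q o)).
  set (c1 := c0 + delta).
  assert (Hc0 : 0 <= c0).
  { unfold c0. pose proof (pos_INR (M * N)). pose proof (dnn o (act q o)).
    pose proof (Rmult_le_pos _ _ H H0). lra. }
  exists (c1 + delta + 1). split; [unfold c1; lra|].
  intros D K HD HK.
  set (K3 := 5 * K + 2 * E' + 2 * delta).
  set (K9 := 5 * K3 + 2 * Ew + 2 * delta).
  destruct (HWPD K9 ltac:(unfold K9, K3, E'; lra)) as [P HP].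
  set (Zreq := Lreq + D + 2 * c1 + 2 * delta + 4 * E' + c0 + 1).
  destruct (HUw Zreq) as [Nw HNw].
  set (n := (P + Nw)%nat).
  set (W := gpow w n).
  assert (HW : Zreq <= d o (act W o)) by (apply HNw; unfold n; lia).
  assert (HW' : Zreq <= d o (act (inv W) o)) by (rewrite d_inv; exact HW).
  assert (Stab0 : stab_finite d act K3 o (act W o)).
  { apply (stab_contain K3 K9 Ew (act W o) o (act (gpow w P) o)).
    - unfold K3, E'; lra.
    - unfold K9; lra.
    - rewrite gp_base0. lra.
    - unfold W, n. rewrite gpow_add, act_mul. apply RP_letter. exact HRw.
    - exact HP. }
  assert (HXl : Lreq <= d o (act Xl o)) by (apply HNp; unfold M; lia).
  assert (HYi : forall i, Lreq <= d o (act (Yi i) o)) by (intros i; apply HNq; unfold M; nia).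
  assert (HinvY : forall i, act (inv (Yi i)) o = act (gpow (inv q) (M * S i)) o)
    by (intros i; unfold Yi; rewrite gpow_inv; reflexivity).
  assert (HinvX : act (inv Xl) o = act (gpow p M) o)
    by (unfold Xl; rewrite <- gpow_inv, g_invK; reflexivity).
  assert (HinvW : inv W = gpow (inv w) n) by (unfold W; rewrite gpow_inv; reflexivity).
  assert (WF : forall i Z, (Z = W \/ Z = inv W) ->
    gp o (act (word (Yi i) Xl Z) o) (act (Yi i) o) <= E' /\
    gp o (act (word (Yi i) Xl Z) o) (act (Yi i) (act Xl o)) <= E' /\
    gp o (act (word (Yi i) Xl Z) o) (act (Yi i) (act Xl (act Z o))) <= E' /\
    d o (act (Yi i) o) + Lreq - 2 * E' <= d o (act (Yi i) (act Xl o)) /\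
    d o (act Z o) - 4 * E' <= d o (act (word (Yi i) Xl Z) o)).
  { intros i Z HZ.
    assert (HZd : Zreq <= d o (act Z o)) by (destruct HZ as [-> | ->]; auto).
    assert (Zreq >= Lreq) by (unfold Zreq, c1, E'; lra).
    apply word_facts; auto.
    - unfold Lreq; lra.
    - lra.
    - rewrite HinvY, gp_sym. apply S1.
    - rewrite HinvX. destruct HZ as [-> | ->]. apply S3. rewrite HinvW. apply S4.
    - rewrite HinvX. destruct HZ as [-> | ->].
      + rewrite HinvW, gp_sym. apply S4.
      + rewrite g_invK, gp_sym. apply S3.
    - rewrite HinvY. apply S1. }
  assert (SEP : forall i j Z, (Z = W \/ Z = inv W) -> (i < j)%nat -> (j < N)%nat ->
     gp (act (word (Yi i) Xl Z) o) (act (word (Yi j) Xl Z) o) o <= c0).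
  { intros i j Z HZ Hij HjN.
    destruct (WF i Z HZ) as [_ [Fi2 [_ [Fi4 _]]]].
    destruct (WF j Z HZ) as [Fj1 _].
    set (Q := gpow q (M * (j - i))).
    assert (HYj : Yi j = gmul G (Yi i) Q).
    { unfold Yi, Q. rewrite <- gpow_add. f_equal. nia. }
    assert (HQ : Lreq <= d o (act Q o)) by (apply HNq; unfold M; nia).
    assert (HYjd : d o (act (Yi i) o) + d o (act Q o) - 2 * Eq <= d o (act (Yi j) o)).
    { unfold Yi, Q. replace (M * S j)%nat with (M * S i + M * (j - i))%nat by nia.
      apply RP_add. exact HRq. }
    assert (HPP : gp (act (Yi i) (act Xl o)) (act (Yi j) o) o <= B + d o (act (Yi i) o)).
    { rewrite HYj, act_mul.
      pose proof (gp_base (act (Yi i) (act Xl o)) (act (Yi i) (act Q o)) o (act (Yi i) o)).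
      rewrite gp_iso in H. pose proof (S2 M (M * (j - i))%nat). fold Xl Q in H0. lra. }
    pose proof (sep_lemma _ _ _ _ E' (B + d o (act (Yi i) o)) Fi2 Fj1 HPP
      ltac:(unfold Lreq, E' in *; lra) ltac:(unfold Lreq, E' in *; lra)) as Hs.
    assert (d o (act (Yi i) o) <= INR (M * N) * d o (act q o)).
    { eapply Rle_trans. apply d_pow. apply Rmult_le_compat_r. apply dnn.
      apply le_INR. nia. }
    unfold c0. lra. }
  set (Sl := map (fun i => word (Yi i) Xl W) (seq 0 N)).
  assert (InS : forall s, In s Sl -> exists i, (i < N)%nat /\ s = word (Yi i) Xl W).
  { intros s Hs. unfold Sl in Hs. apply in_map_iff in Hs. destruct Hs as [i [<- Hi]].
    apply in_seq in Hi. exists i. split; [lia|reflexivity]. }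
  assert (Dist : forall i, (i < N)%nat -> Lreq + D + 2 * c1 + 2 * delta + c0 + 1 <= d o (act (word (Yi i) Xl W) o)).
  { intros i Hi. destruct (WF i W (or_introl eq_refl)) as [_ [_ [_ [_ F5]]]]. unfold Zreq in HW. lra. }
  assert (SepS : forall Z, (Z = W \/ Z = inv W) -> forall i j, (i < N)%nat -> (j < N)%nat -> i <> j ->
     gp (act (word (Yi i) Xl Z) o) (act (word (Yi j) Xl Z) o) o <= c0).
  { intros Z HZ i j Hi Hj Hne. destruct (Nat.lt_gt_cases i j) as [[Hl|Hl] _].
    - exact Hne.
    - apply SEP; auto.
    - rewrite gp_sym. apply SEP; auto. }
  assert (Inj : forall i j, (i < N)%nat -> (j < N)%nat -> word (Yi i) Xl W = word (Yi j) Xl W -> i = j).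
  { intros i j Hi Hj He. destruct (Nat.eq_dec i j) as [ok|Hne]; auto. exfalso.
    pose proof (SepS W (or_introl eq_refl) i j Hi Hj Hne). rewrite He in H.
    rewrite gp_self in H. pose proof (Dist j Hj). rewrite dsym in H.
    assert (0 <= Lreq) by (unfold Lreq; lra). unfold c1 in *. lra. }
  assert (Sep1 : forall s s', In s Sl -> In s' Sl -> s <> s' -> gp (act s o) (act s' o) o <= c0).
  { intros s s' Hs Hs' Hne. destruct (InS s Hs) as [i [Hi ->]]. destruct (InS s' Hs') as [j [Hj ->]].
    apply SepS; auto. intros ->. auto. }
  assert (Sep2 : forall s s', In s Sl -> In s' Sl -> s <> s' ->
     gp (act (inv s) o) (act (inv s') o) o <= c0).
  { intros s s' Hs Hs' Hne. destruct (InS s Hs) as [i [Hi ->]]. destruct (InS s' Hs') as [j [Hj ->]].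
    rewrite !word_inv. apply SepS; auto. intros ->. auto. }
  assert (DistS : forall s, In s Sl -> 2 * c1 + delta < d o (act s o) /\ D <= d o (act s o)).
  { intros s Hs. destruct (InS s Hs) as [i [Hi ->]]. pose proof (Dist i Hi).
    assert (0 <= Lreq) by (unfold Lreq; lra). unfold c1 in *. split; lra. }
  assert (Hlen : length Sl = N) by (unfold Sl; rewrite length_map, length_seq; reflexivity).
  assert (HND : NoDup Sl).
  { unfold Sl. apply NoDup_map_NoDup_ForallPairs; [|apply seq_NoDup].
    intros i j Hi Hj He. apply in_seq in Hi. apply in_seq in Hj. apply Inj; auto; lia. }
  assert (Hcnt : forall (Pr : G -> Prop), (exists a b, forall s, In s Sl -> ~ Pr s -> s = a \/ s = b) ->
     INR (count_P Pr Sl) >= (1 - eta) * INR (length Sl)).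
  { intros Pr [a [b Hab]]. pose proof (count_ge G Pr Sl a b HND Hab) as Hc.
    apply le_INR in Hc. rewrite minus_INR in Hc by lia. rewrite Hlen in *. simpl in Hc. lra. }
  exists Sl. split; [|split; [exact HND|split; [split|]]].
  - intros Hnil. rewrite Hnil in Hlen. simpl in Hlen. lia.
  - intros x y. split.
    + apply Hcnt.
      destruct (bad_pick Sl (fun s => act s o) c0 x Sep1) as [a Hpa].
      destruct (bad_pick Sl (fun s => act (inv s) o) c0 y Sep2) as [b Hpb].
      exists a, b. intros s Hs Hn.
      destruct (Rle_dec (gp x (act s o) o) c1) as [h1|h1].
      * destruct (Rle_dec (gp y (act (inv s) o) o) c1) as [h2|h2].
        -- exfalso. apply Hn. pose proof (pingpong s x y c1 h1 h2 (proj1 (DistS s Hs))). lra.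
        -- right. apply Hpb; auto. unfold c1 in h2. lra.
      * left. apply Hpa; auto. unfold c1 in h1. lra.
    + apply Hcnt.
      destruct (bad_pick Sl (fun s => act (inv s) o) c0 x Sep2) as [a Hpa].
      destruct (bad_pick Sl (fun s => act s o) c0 y Sep1) as [b Hpb].
      exists a, b. intros s Hs Hn.
      destruct (Rle_dec (gp x (act (inv s) o) o) c1) as [h1|h1].
      * destruct (Rle_dec (gp y (act s o) o) c1) as [h2|h2].
        -- exfalso. apply Hn.
           assert (h2' : gp y (act (inv (inv s)) o) o <= c1) by (rewrite g_invK; exact h2).
           pose proof (DistS s Hs) as [Ds _]. rewrite <- d_inv in Ds.
           pose proof (pingpong (inv s) x y c1 h1 h2' Ds). lra.
        -- right. apply Hpb; auto. unfold c1 in h2. lra.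
      * left. apply Hpa; auto. unfold c1 in h1. lra.
  - intros s Hs. apply Rle_ge. apply (proj2 (DistS s Hs)).
  - intros s Hs. destruct (InS s Hs) as [i [Hi ->]].
    destruct (WF i W (or_introl eq_refl)) as [_ [F2 [F3 _]]].
    apply (stab_contain K K3 E' _ (act (Yi i) (act Xl o)) (act (Yi i) (act Xl (act W o)))); auto.
    + lra.
    + unfold K3; lra.
    + pose proof (stab_conj K3 o (act W o) (gmul G (Yi i) Xl) Stab0) as Hc. rewrite !act_mul in Hc. exact Hc.
Qed.

Lemma finish (p q w : G) (Eq Ew : R) :
  RP q Eq -> UB q -> 0 <= Eq -> UB (inv p) -> RP w Ew -> 0 <= Ew -> UB w ->
  (forall K, K >= 0 -> exists P : nat, stab_finite d act K o (act (gpow w P) o)) ->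
  ~ NS (inv p) (inv q) -> ~ NS (inv p) q -> ~ NS p w -> ~ NS p (inv w) ->
  forall eta, 0 < eta < 1 -> exists C, C > 0 /\ forall D K, D > 0 -> K > 0 ->
    exists S : list G, S <> nil /\ NoDup S /\ schottky d act o eta C D S /\
      forall s, In s S -> stab_finite d act K o (act s o).
Proof.
  intros HRq HUq HEq HUp HRw HEw HUw HW N1 N2 N3 N4.
  destruct (notNS_bound _ _ N1) as [B1 H1]. destruct (notNS_bound _ _ N2) as [B2 H2].
  destruct (notNS_bound _ _ N3) as [B3 H3]. destruct (notNS_bound _ _ N4) as [B4 H4].
  set (B := Rabs B1 + Rabs B2 + Rabs B3 + Rabs B4).
  pose proof (Rabs_pos B1). pose proof (Rabs_pos B2). pose proof (Rabs_pos B3). pose proof (Rabs_pos B4).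
  pose proof (Rle_abs B1). pose proof (Rle_abs B2). pose proof (Rle_abs B3). pose proof (Rle_abs B4).
  apply (core p q w Eq Ew B); auto; try (unfold B; lra); intros a b.
  - specialize (H1 a b). unfold B; lra.
  - specialize (H2 a b). unfold B; lra.
  - specialize (H3 a b). unfold B; lra.
  - specialize (H4 a b). unfold B; lra.
Qed.

Lemma conflict f1 f2 v E : ~ NS f1 f2 -> RP v E -> 0 <= E -> NS f1 v -> NS f2 v -> False.
Proof. intros H HR HE A B. apply H. exact (NS_via v E f1 f2 HR HE A B). Qed.

Lemma self_sep f E : RP f E -> ~ NS (inv f) f.
Proof.
  intros HR HNS. destruct (HNS (E + 1)) as [a [b Hab]]. specialize (HR a b). lra.
Qed.
End Geo.

Theorem lemma5p5 (G : Group) (X : Type) (d : X -> X -> R) (delta : R)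
  (act : G -> X -> X) (o : X) :
  is_metric d -> geodesic_space d -> hyperbolic d delta ->
  isometric_action d act ->
  non_elementary d act o ->
  (exists g : G, WPD d act o g) ->
  forall eta : R, 0 < eta < 1 ->
  exists C : R, C > 0 /\
    forall D K : R, D > 0 -> K > 0 ->
      exists S : list G, S <> nil /\ NoDup S /\
        schottky d act o eta C D S /\
        forall s, In s S -> stab_finite d act K o (act s o).
Proof.
  intros Hm _ Hh Ha [g [h [Hg [Hh' Hnot]]]] [w [Hwl HwW]].
  pose proof (lox_RP G X d delta act o Hm Hh Ha) as LRP.
  pose proof (lox_UB G X d act o Hm) as LUB.
  pose proof (RP_inv G X d act o Hm) as RPi.
  pose proof (UB_inv G X d act o Hm Ha) as UBi.
  destruct (LRP g Hg) as [Eg [HEg Rg]]. pose proof (LUB g Hg) as Ug.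
  destruct (LRP h Hh') as [Eh [HEh Rh]]. pose proof (LUB h Hh') as Uh.
  destruct (LRP w Hwl) as [Ew [HEw Rw]]. pose proof (LUB w Hwl) as Uw.
  pose proof (RPi _ _ Rg) as Rg'. pose proof (RPi _ _ Rh) as Rh'. pose proof (RPi _ _ Rw) as Rw'.
  pose proof (UBi _ Ug) as Ug'. pose proof (UBi _ Uh) as Uh'.
  assert (Fr : forall f1 f2 E1 E2, RP G X d act o f1 E1 -> UB G X d act o f1 ->
     RP G X d act o f2 E2 -> UB G X d act o f2 -> 0 <= E1 -> 0 <= E2 ->
     (g = f1 \/ f1 = ginv G g) -> (h = f2 \/ f2 = ginv G h) -> ~ NS G X d act o f1 f2).
  { intros f1 f2 E1 E2 R1 U1 R2 U2 HE1 HE2 H1 H2 HNS. apply Hnot.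
    exact (NS_common G X d delta act o Hm Hh Ha g h f1 f2 E1 E2 R1 U1 R2 U2 HE1 HE2 H1 H2 HNS). }
  pose proof (Fr g h Eg Eh Rg Ug Rh Uh HEg HEh (or_introl eq_refl) (or_introl eq_refl)) as F1.
  pose proof (Fr g (ginv G h) Eg Eh Rg Ug Rh' Uh' HEg HEh (or_introl eq_refl) (or_intror eq_refl)) as F2.
  pose proof (Fr (ginv G g) h Eg Eh Rg' Ug' Rh Uh HEg HEh (or_intror eq_refl) (or_introl eq_refl)) as F3.
  pose proof (Fr (ginv G g) (ginv G h) Eg Eh Rg' Ug' Rh' Uh' HEg HEh (or_intror eq_refl) (or_intror eq_refl)) as F4.
  pose proof (self_sep G X d act o g Eg Rg) as F5.
  pose proof (self_sep G X d act o h Eh Rh) as F6.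
  pose proof (NS_sym G X d act o Hm) as Sym.
  assert (HWPD : forall K, K >= 0 -> exists P : nat, stab_finite d act K o (act (gpow w P) o)).
  { intros K HK. destruct (HwW o K HK) as [P [_ HP]]. exists P. exact HP. }
  pose proof (finish G X d delta act o Hm Hh Ha) as Fin.
  pose proof (conflict G X d delta act o Hm Hh Ha) as Cf.
  assert (Cw : forall f1 f2, ~ NS G X d act o f1 f2 ->
     ~ (NS G X d act o f1 w /\ NS G X d act o f2 w) /\
     ~ (NS G X d act o f1 (ginv G w) /\ NS G X d act o f2 (ginv G w))).
  { intros f1 f2 Hn. split; intros [A B].
    - exact (Cf f1 f2 w Ew Hn Rw HEw A B).
    - exact (Cf f1 f2 (ginv G w) Ew Hn Rw' HEw A B). }
  destruct (classic (~ NS G X d act o g w /\ ~ NS G X d act o g (ginv G w))) as [[A1 A2]|Ag].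
  {
    apply (Fin g h w Eh Ew Rh Uh HEh Ug' Rw HEw Uw HWPD F4 F3 A1 A2). }
  destruct (classic (~ NS G X d act o (ginv G g) w /\ ~ NS G X d act o (ginv G g) (ginv G w))) as [[A1 A2]|Ag'].
  {
    apply (Fin (ginv G g) h w Eh Ew Rh Uh HEh ltac:(rewrite (g_invK G); exact Ug) Rw HEw Uw HWPD
      ltac:(rewrite (g_invK G); exact F2) ltac:(rewrite (g_invK G); exact F1) A1 A2). }
  destruct (classic (~ NS G X d act o h w /\ ~ NS G X d act o h (ginv G w))) as [[A1 A2]|Ah].
  {
    apply (Fin h g w Eg Ew Rg Ug HEg Uh' Rw HEw Uw HWPD
      ltac:(intro Hc; apply F4; apply Sym; exact Hc) ltac:(intro Hc; apply F2; apply Sym; exact Hc) A1 A2). }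
  destruct (classic (~ NS G X d act o (ginv G h) w /\ ~ NS G X d act o (ginv G h) (ginv G w))) as [[A1 A2]|Ah'].
  {
    apply (Fin (ginv G h) g w Eg Ew Rg Ug HEg ltac:(rewrite (g_invK G); exact Uh) Rw HEw Uw HWPD
      ltac:(rewrite (g_invK G); intro Hc; apply F3; apply Sym; exact Hc)
      ltac:(rewrite (g_invK G); intro Hc; apply F1; apply Sym; exact Hc) A1 A2). }
  exfalso.
  apply not_and_or in Ag, Ag', Ah, Ah'.
  assert (F5' : ~ NS G X d act o g (ginv G g)) by (intro Hc; apply F5; apply Sym; exact Hc).
  assert (F6' : ~ NS G X d act o h (ginv G h)) by (intro Hc; apply F6; apply Sym; exact Hc).
  destruct Ag as [Ag|Ag]; apply NNPP in Ag;
  destruct Ag' as [Ag'|Ag']; apply NNPP in Ag';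
  destruct Ah as [Ah|Ah]; apply NNPP in Ah;
  destruct Ah' as [Ah'|Ah']; apply NNPP in Ah';
  first
  [ exact (proj1 (Cw _ _ F5') (conj Ag Ag')) | exact (proj2 (Cw _ _ F5') (conj Ag Ag'))
  | exact (proj1 (Cw _ _ F6') (conj Ah Ah')) | exact (proj2 (Cw _ _ F6') (conj Ah Ah'))
  | exact (proj1 (Cw _ _ F1) (conj Ag Ah)) | exact (proj2 (Cw _ _ F1) (conj Ag Ah))
  | exact (proj1 (Cw _ _ F2) (conj Ag Ah')) | exact (proj2 (Cw _ _ F2) (conj Ag Ah'))
  | exact (proj1 (Cw _ _ F3) (conj Ag' Ah)) | exact (proj2 (Cw _ _ F3) (conj Ag' Ah))
  | exact (proj1 (Cw _ _ F4) (conj Ag' Ah')) | exact (proj2 (Cw _ _ F4) (conj Ag' Ah')) ].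
Qed.
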